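(* Let $G$ be a group and $H$ a subgroup. Let $\sim$ be a nontrivial equivalence relation on $G/H - \{\bar{1}\}$ such that if $\bar{a} \sim \bar{b}$ and $\bar{a} \neq \bar{b}$ then $\overline{a^{-1}} \sim \overline{a^{-1}b}$. Let $a,b \in G$. If $\overline{g^{-1}a} \sim \overline{g^{-1}b}$ for all $g \notin aH \cup bH$, then $\bar{a} = \bar{b}$.
   Context: $G/H$ is the set of left cosets and $\bar{a} = aH$. An equivalence relation is nontrivial if it has at least two classes. *)

(* Defs.v *)
Set Implicit Arguments.

Record group := Group {
  carrier :> Type;
  gmul : carrier -> carrier -> carrier;
  gone : carrier;
  ginv : carrier -> carrier;
  gmulA : forall x y z, gmul x (gmul y z) = gmul (gmul x y) z;
  gmul1l : forall x, gmul gone x = x;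
  gmul1r : forall x, gmul x gone = x;
  gmulVl : forall x, gmul (ginv x) x = gone;
  gmulVr : forall x, gmul x (ginv x) = gone
}.

Arguments gmul {g}.
Arguments gone {g}.
Arguments ginv {g}.

Definition is_subgroup {G : group} (H : G -> Prop) : Prop :=
  H gone /\ (forall x y, H x -> H y -> H (gmul x y)) /\ (forall x, H x -> H (ginv x)).

(* Equality of left cosets: aH = bH  <->  a^{-1} b in H. *)
Definition coset_eq {G : group} (H : G -> Prop) (a b : G) : Prop :=
  H (gmul (ginv a) b).

Definition in_lcoset {G : group} (H : G -> Prop) (a g : G) : Prop :=
  H (gmul (ginv a) g).

(* An equivalence relation on G/H - {1bar}, encoded on representatives:
   R relates only elements outside H (i.e. cosets different from 1bar = H),
   depends only on the cosets of its arguments, and is an equivalence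
   relation on the set {a | a not in H}. *)
Definition coset_equiv {G : group} (H : G -> Prop) (R : G -> G -> Prop) : Prop :=
  (forall a b, R a b -> ~ H a /\ ~ H b) /\
  (forall a a' b b', coset_eq H a a' -> coset_eq H b b' -> R a b -> R a' b') /\
  (forall a, ~ H a -> R a a) /\
  (forall a b, R a b -> R b a) /\
  (forall a b c, R a b -> R b c -> R a c).

(* Nontrivial: at least two equivalence classes. *)
Definition nontrivial_coset_equiv {G : group} (H : G -> Prop) (R : G -> G -> Prop) : Prop :=
  exists a b, ~ H a /\ ~ H b /\ ~ R a b.

(* Main.v *)
Require Import Defs.
From Stdlib Require Import Classical.

Section GL.
Variable G : group.

Lemma inv_uniq (x y : G) : gmul x y = gone -> y = ginv x.
Proof.
  intro E. rewrite <- (gmul1l G y), <- (gmulVl G x), <- gmulA, E, gmul1r. reflexivity.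
Qed.

Lemma inv_inv (x : G) : ginv (ginv x) = x.
Proof. symmetry. apply inv_uniq. apply gmulVl. Qed.

Lemma inv_mul (x y : G) : ginv (gmul x y) = gmul (ginv y) (ginv x).
Proof.
  symmetry. apply inv_uniq.
  rewrite gmulA, <- (gmulA G x y), gmulVr, gmul1r, gmulVr. reflexivity.
Qed.

Lemma mulKV (x y : G) : gmul (ginv x) (gmul x y) = y.
Proof. rewrite gmulA, gmulVl, gmul1l. reflexivity. Qed.

Lemma mulVK (x y : G) : gmul x (gmul (ginv x) y) = y.
Proof. rewrite gmulA, gmulVr, gmul1l. reflexivity. Qed.
End GL.

Theorem lemma3p8 (G : group) (H : G -> Prop) (R : G -> G -> Prop) :
  is_subgroup H ->
  coset_equiv H R ->
  nontrivial_coset_equiv H R ->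
  (forall a b : G, R a b -> ~ coset_eq H a b ->
     R (ginv a) (gmul (ginv a) b)) ->
  forall a b : G,
    (forall g : G, ~ in_lcoset H a g -> ~ in_lcoset H b g ->
       R (gmul (ginv g) a) (gmul (ginv g) b)) ->
    coset_eq H a b.
Proof.
  intros [H1 [HM HV]] [Rn [Rc [Rr [Rs Rt]]]] [a0 [b0 [Ha0 [Hb0 Nab]]]] Ax a b Hyp.
  apply NNPP. intro Hc. unfold coset_eq in Hc.
  set (c := gmul (ginv a) b) in *.
  assert (Key : forall v, ~ H v -> R v c).
  { intros v Hv.
    destruct (classic (H (gmul (ginv v) c))) as [Hvc | Hvc].
    - apply (Rc c v c c).
      + unfold coset_eq. replace (gmul (ginv c) v) with (ginv (gmul (ginv v) c)) by (rewrite inv_mul, inv_inv; reflexivity). apply HV. exact Hvc.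
      + unfold coset_eq. rewrite gmulVl. exact H1.
      + apply Rr. exact Hc.
    - assert (E : R (ginv v) (gmul (ginv v) c)).
      { specialize (Hyp (gmul a v)).
        unfold in_lcoset in Hyp.
        rewrite mulKV, inv_mul in Hyp.
        rewrite <- gmulA, gmulVl, gmul1r in Hyp.
        rewrite <- gmulA in Hyp. fold c in Hyp.
        apply Hyp; [exact Hv|].
        intro Hb. apply Hvc.
        replace (gmul (ginv v) c) with (ginv (gmul (ginv b) (gmul a v))).
        - apply HV. exact Hb.
        - rewrite !inv_mul, inv_inv. unfold c. rewrite gmulA. reflexivity. }
      specialize (Ax _ _ E).
      rewrite inv_inv, mulVK in Ax. apply Ax.
      unfold coset_eq. rewrite inv_inv, mulVK. exact Hc. }
  apply Nab. apply (Rt _ c). apply Key; exact Ha0. apply Rs, Key; exact Hb0.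
Qed.
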